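(* Let $\gamma$ be a non-polyhedral gauge on $\mathbb{R}^2$. Then there exist $a,b\in\mathbb{R}^2$ such that $\mathrm{EH}_\gamma(\{a,b\})$ is unbounded.
   Context: A gauge $\gamma$ on $\mathbb{R}^d$ is the Minkowski functional of a convex compact set $B_\gamma$ with the origin in its interior (not necessarily symmetric); it is polyhedral if $B_\gamma$ is a polytope. $\gamma^\circ$ is the dual gauge with unit ball $B_{\gamma^\circ}$. For $u\in B_{\gamma^\circ}$: if $\gamma^\circ(u)=1$, $N(u)=\mathbb{R}_{\ge0}F(u)$ with $F(u)=\{x\in B_\gamma:\langle u,x\rangle=1\}$; otherwise $N(u)=\{0\}$. For finite $S$ and $\pi=(u_s)_{s\in S}\subset B_{\gamma^\circ}$, $C_\pi=\bigcap_{s\in S}(s+N(u_s))$; a nonempty $C_\pi$ is an elementary convex set for $S$; the elementary hull $\mathrm{EH}_\gamma(S)$ is the union of all bounded elementary convex sets for $S$. *)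

(* Defs.v *)
From HB Require Import structures.
From mathcomp Require Import all_boot all_order all_algebra.
From mathcomp Require Import all_classical all_reals all_analysis.
Set Implicit Arguments. Unset Strict Implicit. Unset Printing Implicit Defensive.
Import Order.TTheory GRing.Theory Num.Theory.
Import numFieldNormedType.Exports.
Local Open Scope classical_set_scope.
Local Open Scope ring_scope.

Section Gauges.
Variable R : realType.
Notation P := (R * R)%type.

Definition dotp (u x : P) : R := u.1 * x.1 + u.2 * x.2.

Definition addp (x y : P) : P := (x.1 + y.1, x.2 + y.2).
Definition scalep (t : R) (x : P) : P := (t * x.1, t * x.2).

Definition convex_set2 (B : set P) : Prop :=
  forall x y t, B x -> B y -> 0 <= t -> t <= 1 ->
    B (addp (scalep t x) (scalep (1 - t) y)).

Definition gauge_ball (B : set P) : Prop :=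
  convex_set2 B /\ compact B /\ (B°) (0, 0).

Definition gauge (B : set P) (x : P) : R :=
  inf [set t | 0 <= t /\ exists2 y, B y & x = scalep t y].

Definition conv_hull (s : seq P) : set P :=
  [set x | exists w : nat -> R, (forall i, 0 <= w i) /\
     \sum_(i < size s) w i = 1 /\
     x = (\sum_(i < size s) w i * (nth (0, 0) s i).1,
          \sum_(i < size s) w i * (nth (0, 0) s i).2)].

Definition polytope (B : set P) : Prop := exists s : seq P, B = conv_hull s.

Definition dual_gauge (B : set P) (u : P) : R := sup [set dotp u x | x in B].
Definition dual_ball (B : set P) : set P := [set u | dual_gauge B u <= 1].

Definition Fface (B : set P) (u : P) : set P := [set x | B x /\ dotp u x = 1].
Definition Ncone (B : set P) (u : P) : set P :=
  if dual_gauge B u == 1 then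
    [set z | exists t, exists2 x, 0 <= t /\ Fface B u x & z = scalep t x]
  else [set (0, 0)].

Definition Cpi (B : set P) (S : set P) (pi : P -> P) : set P :=
  [set z | forall s, S s -> exists2 y, Ncone B (pi s) y & z = addp s y].

Definition bounded2 (A : set P) : Prop :=
  exists M : R, forall x, A x -> `|x.1| <= M /\ `|x.2| <= M.

Definition EH (B : set P) (S : set P) : set P :=
  [set z | exists pi : P -> P, (forall s, S s -> dual_ball B (pi s)) /\
     Cpi B S pi !=set0 /\ bounded2 (Cpi B S pi) /\ Cpi B S pi z].

End Gauges.

(* Main.v *)
From HB Require Import structures.
Require Import Defs.
From mathcomp Require Import all_boot all_order all_algebra finmap.
From mathcomp Require Import all_classical all_reals all_analysis.
From mathcomp Require Import ring lra.
Import Order.TTheory GRing.Theory Num.Theory.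
Import numFieldNormedType.Exports.
Local Open Scope classical_set_scope.
Local Open Scope ring_scope.

Section Conv.
Variable R : realType.
Notation P := (R * R)%type.

Lemma pair_eq (x y : P) : x.1 = y.1 -> x.2 = y.2 -> x = y.
Proof. by case: x; case: y => /= ? ? ? ? -> ->. Qed.

Lemma sum_shift (n : nat) (F : nat -> R) :
  \sum_(i < n.+1) F i = F 0%N + \sum_(i < n) F i.+1.
Proof. rewrite big_ord_recl /=; congr (_ + _); apply: eq_bigr => i _; by rewrite lift0. Qed.

Lemma CH_nil : conv_hull ([::] : seq P) = set0.
Proof.
apply/seteqP; split => // x [w [_ [h _]]]; move: h; rewrite big_ord0 => /eqP.
by rewrite eq_sym oner_eq0.
Qed.

Lemma CH_one (p : P) : conv_hull [:: p] = [set p].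
Proof.
apply/seteqP; split => x.
  move=> [w [_ [h ->]]]; move: h; rewrite /= !big_ord1 /= => ->.
  by apply: pair_eq; rewrite /= mul1r.
move=> ->; exists (fun _ => 1); split => //; rewrite /= !big_ord1 /= !mul1r.
by split => //; case: p.
Qed.

Lemma CH_cons_sup (p : P) (s : seq P) t c : 0 <= t <= 1 -> conv_hull s c ->
  conv_hull (p :: s) (addp (scalep t p) (scalep (1 - t) c)).
Proof.
move=> /andP [t0 t1] [w [w0 [ws ->]]].
exists (fun n => if n is k.+1 then (1 - t) * w k else t); split.
  by case=> [|k] //; rewrite mulr_ge0 // subr_ge0.
rewrite /= !big_ord_recl /=; split.
  rewrite -mulr_sumr; under eq_bigr do rewrite add0n.
  by rewrite ws; ring.
apply: pair_eq; rewrite /addp /scalep /=.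
  rewrite mulr_sumr; congr (_ + _); apply: eq_bigr => i _; rewrite add0n; ring.
rewrite mulr_sumr; congr (_ + _); apply: eq_bigr => i _; rewrite add0n; ring.
Qed.

Lemma CH_ne (s : seq P) : s != [::] -> conv_hull s !=set0.
Proof.
elim: s => // p [|q s] IH _.
  by exists p; rewrite CH_one.
have [c hc] := IH isT.
exists (addp (scalep 0 p) (scalep (1 - 0) c)); apply: CH_cons_sup => //.
by rewrite lexx ler01.
Qed.

Lemma CH_cons_sub (p : P) (s : seq P) x : s != [::] -> conv_hull (p :: s) x ->
  exists t c, 0 <= t <= 1 /\ conv_hull s c /\ x = addp (scalep t p) (scalep (1 - t) c).
Proof.
move=> sne [w [w0 [ws ->]]].
move: ws; rewrite /= !big_ord_recl /=.
have E1 : \sum_(i < size s) w (bump 0 i) = \sum_(i < size s) w i.+1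
  by apply: eq_bigr => i _; rewrite /bump leq0n.
have E2 : forall j : bool, \sum_(i < size s) w (bump 0 i) * (if j then (nth 0 s (0 + i)).1 else (nth 0 s (0 + i)).2)
   = \sum_(i < size s) w i.+1 * (if j then (nth 0 s i).1 else (nth 0 s i).2)
  by move=> j; apply: eq_bigr => i _; rewrite /bump leq0n add0n.
rewrite E1 (E2 true) (E2 false) => ws.
have S0 : 0 <= \sum_(i < size s) w i.+1 by apply: sumr_ge0 => i _.
set t := w 0%N in ws *.
have t0 : 0 <= t := w0 0%N.
have [t1|t1] := eqVneq t 1.
  have Z : forall i : 'I_(size s), w i.+1 = 0.
    have := ws; rewrite t1 => /eqP; rewrite -subr_eq0 addrC addKr => /eqP.
    by move/psumr_eq0P => H i; apply: H.
  have [c hc] := CH_ne _ sne.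
  exists 1, c; split; first by rewrite lexx ler01.
  split => //; apply: pair_eq; rewrite /addp /scalep /= t1 subrr !mul0r !addr0 mul1r;
    rewrite big1 ?addr0 // => i _; by rewrite Z mul0r.
have t1' : t < 1 by rewrite lt_neqAle t1 /= -ws lerDl.
have u0 : 1 - t != 0 by rewrite subr_eq0 eq_sym.
exists t, ((\sum_(i < size s) w i.+1 * (nth 0 s i).1) / (1 - t),
           (\sum_(i < size s) w i.+1 * (nth 0 s i).2) / (1 - t)).
split; first by rewrite t0 ltW.
split.
  exists (fun n => w n.+1 / (1 - t)); split.
    by move=> n; rewrite divr_ge0 // subr_ge0 ltW.
  split.
    rewrite -mulr_suml; apply: (canLR (mulfK u0)); rewrite mul1r; move: ws; lra.
  by congr pair; rewrite mulr_suml; apply: eq_bigr => i _; rewrite mulrAC.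
apply: pair_eq; rewrite /addp /scalep /=; congr (_ + _); rewrite mulrC divfK //.
Qed.


Lemma f_cont (p : P) : continuous (fun tc : R * P => addp (scalep tc.1 p) (scalep (1 - tc.1) tc.2)).
Proof.
move=> [t c].
apply: cvgD; first by apply: cvgZl; exact: cvg_fst.
apply: cvgZ; last exact: cvg_snd.
apply: cvgB; first exact: cvg_cst.
exact: cvg_fst.
Qed.

Lemma CH_convex (s : seq P) : convex_set2 (conv_hull s).
Proof.
move=> x y t [w1 [w10 [ws1 ->]]] [w2 [w20 [ws2 ->]]] t0 t1.
exists (fun i => t * w1 i + (1 - t) * w2 i); split.
  by move=> i; rewrite addr_ge0 // mulr_ge0 // subr_ge0.
split; first by rewrite big_split /= -!mulr_sumr ws1 ws2; ring.
by apply: pair_eq; rewrite /= !mulr_sumr -big_split; apply: eq_bigr => i _ /=; ring.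
Qed.

Lemma CH_compact (s : seq P) : compact (conv_hull s).
Proof.
elim: s => [|p [|q s] IH]; first by rewrite CH_nil; exact: compact0.
  by rewrite CH_one; exact: compact_set1.
have -> : conv_hull [:: p, q & s] =
  (fun tc : R * P => addp (scalep tc.1 p) (scalep (1 - tc.1) tc.2)) @`
     (`[0, 1]%classic `*` conv_hull (q :: s)).
  apply/seteqP; split => x.
    move=> /CH_cons_sub [//| t [c [tr [hc ->]]]].
    by exists (t, c) => //; split => //=; rewrite in_itv /=.
  move=> [[t c] [ht hc] <-]; apply: CH_cons_sup hc.
  by move: ht; rewrite /= in_itv /=.
apply: continuous_compact; first exact/continuous_subspaceT/f_cont.
by apply: compact_setX => //; exact: segment_compact.
Qed.

Lemma CH_sub (A : set P) (s : seq P) : convex_set2 A -> (forall p, p \in s -> A p) ->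
  conv_hull s `<=` A.
Proof.
move=> cA; elim: s => [|p [|q s] IH] Hs; first by rewrite CH_nil.
  by rewrite CH_one => x ->; apply: Hs; rewrite mem_seq1.
move=> x /CH_cons_sub [//| t [c [/andP [t0 t1] [hc ->]]]].
apply: cA => //; first by apply: Hs; rewrite in_cons eqxx.
by apply: IH => // y hy; apply: Hs; rewrite in_cons hy orbT.
Qed.

Lemma CH_mem (s : seq P) p : p \in s -> conv_hull s p.
Proof.
elim: s => // q [|q' s] IH.
  by rewrite mem_seq1 CH_one => /eqP.
rewrite in_cons => /orP [/eqP ->|hp].
  have [c hc] := CH_ne (q' :: s) isT.
  have e : addp (scalep 1 q) (scalep (1 - 1) c) = q.
    by apply: pair_eq; rewrite /= subrr !mul0r addr0 mul1r.
  rewrite -[X in conv_hull _ X]e.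
  by apply: CH_cons_sup => //; rewrite lexx ler01.
have e : addp (scalep 0 q) (scalep (1 - 0) p) = p.
  by apply: pair_eq; rewrite /= subr0 !mul0r add0r mul1r.
rewrite -[X in conv_hull _ X]e.
by apply: CH_cons_sup; [rewrite lexx ler01 | exact: IH].
Qed.

End Conv.
Arguments pair_eq {R x y}.
Arguments CH_ne {R s}.
Arguments CH_compact {R}.
Arguments CH_convex {R s}.
Arguments CH_mem {R s p}.
Arguments CH_sub {R A s}.

Section Aux.
Variable R : realType.
Notation P := (R * R)%type.

Lemma lip_cont (f : P -> R) (K : R) : 0 <= K ->
  (forall x y, `|f x - f y| <= K * `|x - y|) -> continuous f.
Proof.
move=> K0 Hf x; apply/cvgrPdist_lt => e e0.
have K1 : 0 < K + 1 by lra.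
near=> y.
apply: (le_lt_trans (Hf x y)).
apply: (@le_lt_trans _ _ ((K+1) * `|x - y|)); first by rewrite ler_wpM2r // ?lerDl.
rewrite -ltr_pdivlMl //.
near: y.
apply: cvgr_dist_lt; first exact: cvg_id.
by rewrite mulr_gt0 // invr_gt0.
Unshelve. all: by end_near. Qed.

Lemma coord_le (x : P) : `|x.1| <= `|x| /\ `|x.2| <= `|x|.
Proof. rewrite prod_normE; split; rewrite le_max lexx ?orbT //. Qed.

Lemma dotp_cont (u : P) : continuous (dotp u).
Proof.
apply: (@lip_cont _ (`|u.1| + `|u.2|)); first by rewrite addr_ge0.
move=> x y; rewrite /dotp.
have [h1 h2] := coord_le (x - y).
have -> : u.1 * x.1 + u.2 * x.2 - (u.1 * y.1 + u.2 * y.2) = u.1 * (x - y).1 + u.2 * (x-y).2.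
  by rewrite /=; ring.
rewrite (le_trans (ler_normD _ _)) // !normrM mulrDl.
by rewrite lerD // ler_wpM2l.
Qed.

Lemma dotp_bound (u x : P) : `|dotp u x| <= (`|u.1| + `|u.2|) * `|x|.
Proof.
have [h1 h2] := coord_le x.
rewrite /dotp (le_trans (ler_normD _ _)) // !normrM mulrDl.
by rewrite lerD // ler_wpM2l.
Qed.

Variable B : set P.
Hypothesis hB : gauge_ball B.

Lemma B_compact : compact B. Proof. by case: hB => _ []. Qed.
Lemma B_convex : convex_set2 B. Proof. by case: hB. Qed.
Lemma B_closed : closed B. Proof. exact: compact_closed (@norm_hausdorff _ _) B_compact. Qed.

Lemma B_bounded : exists Rb, 0 < Rb /\ forall x, B x -> `|x| <= Rb.
Proof.
have [M [Mr MA]] := compact_bounded B_compact.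
exists (`|M| + 1); split; first by rewrite ltr_pwDr // normr_ge0.
apply: MA; rewrite (le_lt_trans (real_ler_norm Mr)) // ltrDl //.
Qed.

Lemma B_ball : exists r, 0 < r /\ forall x, `|x| < r -> B x.
Proof.
case: hB => _ [_ /nbhs_ballP [e e0 He]].
exists e; split => // x hx; apply: He.
by rewrite -ball_normE /= sub0r normrN.
Qed.

Lemma B0 : B 0.
Proof. by have [r [r0 H]] := B_ball; apply: H; rewrite normr0. Qed.

Lemma img_has_sup u : has_sup [set dotp u x | x in B].
Proof.
have [Rb [Rb0 HR]] := B_bounded.
split; first by exists (dotp u 0), 0 => //; exact: B0.
exists ((`|u.1| + `|u.2|) * Rb) => _ [x Bx <-].
rewrite (le_trans (ler_norm _)) // (le_trans (dotp_bound _ _)) //.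
by rewrite ler_wpM2l ?addr_ge0 // HR.
Qed.

Lemma argmax_on (A : set P) (f : P -> R) : A !=set0 -> compact A -> continuous f ->
  exists2 x0, A x0 & forall x, A x -> f x <= f x0.
Proof.
move=> A0 cA cf.
have [c cA' H] := compact_EVT_max A0 cA (continuous_subspaceT cf).
exists c; first by rewrite inE in cA'.
by move=> x Ax; apply: H; rewrite inE.
Qed.

Lemma argmax_B u : exists2 x0, B x0 & forall x, B x -> dotp u x <= dotp u x0.
Proof. apply: argmax_on => //; [by exists 0; exact: B0 | exact: B_compact | exact: dotp_cont]. Qed.

Lemma dual_gauge_max u x0 : B x0 -> (forall x, B x -> dotp u x <= dotp u x0) ->
  dual_gauge B u = dotp u x0.
Proof.
move=> Bx0 H; apply/le_anti/andP; split.
  by apply: ge_sup; [exists (dotp u x0), x0 | move=> _ [x Bx <-]; exact: H].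
by apply: sup_upper_bound; [exact: img_has_sup | exists x0].
Qed.

Definition DD u := dual_gauge B u = 1.

Lemma D_le u x : DD u -> B x -> dotp u x <= 1.
Proof.
rewrite /DD => <- Bx.
by apply: sup_upper_bound; [exact: img_has_sup | exists x].
Qed.

Lemma D_face u : DD u -> exists x, Fface B u x.
Proof.
move=> Du; have [x0 Bx0 H] := argmax_B u.
exists x0; split => //; rewrite -(dual_gauge_max _ _ Bx0 H); exact: Du.
Qed.


Lemma sq_pos (w : P) : w != 0 -> 0 < w.1 ^+ 2 + w.2 ^+ 2.
Proof.
case: w => a b; rewrite /= xpair_eqE negb_and => /orP [] h.
  have : 0 < a ^+ 2 by rewrite exprn_even_gt0.
  have : 0 <= b ^+ 2 by rewrite sqr_ge0.
  lra.
have : 0 < b ^+ 2 by rewrite exprn_even_gt0.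
have : 0 <= a ^+ 2 by rewrite sqr_ge0.
lra.
Qed.

Lemma dotpZ (u x : P) (a : R) : dotp u (scalep a x) = a * dotp u x.
Proof. rewrite /dotp /=; ring. Qed.
Lemma dotZp (u x : P) (a : R) : dotp (scalep a u) x = a * dotp u x.
Proof. rewrite /dotp /=; ring. Qed.
Lemma normZ (a : R) (x : P) : `|scalep a x| = `|a| * `|x|.
Proof. exact: prod_norm_scale. Qed.

Lemma pos_h w : w != 0 -> exists2 x, B x & 0 < dotp w x.
Proof.
move=> w0; have [r [r0 Hr]] := B_ball.
have wpos : 0 < `|w| by rewrite normr_gt0.
exists (scalep (r / (2 * `|w|)) w).
  apply: Hr; rewrite normZ ger0_norm; last by rewrite divr_ge0 // ?ltW // mulr_gt0.
  have -> : r / (2 * `|w|) * `|w| = r / 2 by field; rewrite gt_eqF.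
  lra.
rewrite dotpZ mulr_gt0 //; first by rewrite divr_gt0 // mulr_gt0.
by have := sq_pos w w0; rewrite /dotp !expr2.
Qed.

Lemma normalize w : w != 0 -> exists u, DD u /\
  forall p, Fface B u p -> forall y, B y -> dotp w y <= dotp w p.
Proof.
move=> w0; have [x0 Bx0 H] := argmax_B w.
have [x1 Bx1 px1] := pos_h w w0.
set m := dotp w x0.
have m0 : 0 < m by apply: (lt_le_trans px1); exact: H.
exists (scalep m^-1 w); split.
  rewrite /DD (dual_gauge_max _ x0) // ?dotZp ?mulVf ?gt_eqF //.
  by move=> x Bx; rewrite !dotZp mulrC ler_pdivrMr // mul1r; exact: H.
move=> p [Bp]; rewrite dotZp => hp y By.
have -> : dotp w p = m by rewrite -[dotp w p](mulVKf (lt0r_neq0 m0)) hp mulr1.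
exact: H.
Qed.

Lemma face_norm r u x : (forall y, `|y| < r -> B y) -> DD u -> Fface B u x -> r <= `|x|.
Proof.
move=> Hr Du [Bx hx]; rewrite leNgt; apply/negP => xr.
have x0 : x != 0 by apply/eqP => ex; move: hx; rewrite ex /dotp /= !mulr0 addr0 => /eqP; rewrite eq_sym oner_eq0.
have nx : 0 < `|x| by rewrite normr_gt0.
set l := (r + `|x|) / (2 * `|x|).
have l1 : 1 < l by rewrite /l ltr_pdivlMr ?mulr_gt0 //; lra.
have : B (scalep l x).
  apply: Hr; rewrite normZ ger0_norm ?(le_trans _ (ltW l1)) //.
  have -> : l * `|x| = (r + `|x|) / 2 by rewrite /l; field; rewrite gt_eqF.
  lra.
move=> /(D_le _ _ Du); rewrite dotpZ hx mulr1; lra.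
Qed.


Lemma face_compact u : compact (Fface B u).
Proof.
have -> : Fface B u = B `&` (dotp u @^-1` [set 1]) by [].
apply: compact_closedI; first exact: B_compact.
apply: preimage_closed; first by move=> x _; exact: dotp_cont.
apply: accessible_closed_set1; apply: hausdorff_accessible; exact: Rhausdorff.
Qed.

Lemma face_argmax u (f : P -> R) : DD u -> continuous f ->
  exists2 q, Fface B u q & forall y, Fface B u y -> f y <= f q.
Proof.
move=> Du cf; apply: argmax_on => //; last exact: face_compact.
by have [x hx] := D_face _ Du; exists x.
Qed.

Lemma endpoints u0 : DD u0 -> exists q1 q2, Fface B u0 q1 /\ Fface B u0 q2 /\
  forall u z, DD u -> Fface B u0 z -> Fface B u z -> Fface B u q1 \/ Fface B u q2.
Proof.
move=> Du0.
set e : P := (- u0.2, u0.1).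
have [q1 F1 H1] := face_argmax _ (dotp e) Du0 (dotp_cont e).
have [q2 F2 H2] := face_argmax _ (dotp (- e)) Du0 (dotp_cont (- e)).
exists q1, q2; split => //; split => // u z Du Fz Fuz.
have key : forall q, Fface B u0 q ->
   (dotp u q - 1) * (u0.1 ^+ 2 + u0.2 ^+ 2) = dotp u e * (dotp e q - dotp e z).
  move=> q [_ hq]; case: Fz => _ hz; case: Fuz => _ huz.
  move: hq hz huz; rewrite /dotp /= => hq hz huz.
  rewrite -huz; apply/eqP; rewrite -subr_eq0; apply/eqP.
  have -> : 0 = (u.1 * u0.1 + u.2 * u0.2) * ((u0.1 * q.1 + u0.2 * q.2) - (u0.1 * z.1 + u0.2 * z.2)).
    by rewrite hq hz subrr mulr0.
  ring.
have u00 : u0 != 0.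
  apply/eqP => e0; case: Fz => _; rewrite e0 /dotp /= !mul0r addr0 => /eqP.
  by rewrite eq_sym oner_eq0.
have N0 := sq_pos u0 u00.
have [ge|lt] := leP 0 (dotp u e).
  left; have [Bq1 _] := F1; split => //; apply/le_anti/andP; split; first exact: D_le.
  have := key q1 F1; have := H1 z Fz.
  nra.
right; have [Bq2 _] := F2; split => //; apply/le_anti/andP; split; first exact: D_le.
have := key q2 F2; have := H2 z Fz.
have hn : forall y, dotp (- e) y = - dotp e y by move=> y; rewrite /dotp /=; ring.
rewrite !hn => h k; have : 0 <= (dotp u q2 - 1) * (u0.1 ^+ 2 + u0.2 ^+ 2).
  rewrite k; apply: mulr_le0; lra.
move=> hh; nra.
Qed.


Lemma sqd_cont (y : P) : continuous (fun c : P => - ((y.1 - c.1) * (y.1 - c.1) + (y.2 - c.2) * (y.2 - c.2))).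
Proof.
move=> c; apply: cvgN; apply: cvgD; apply: cvgM; apply: cvgB;
  try exact: cvg_cst; [exact: cvg_fst|exact: cvg_fst|exact: cvg_snd|exact: cvg_snd].
Qed.

Lemma some_DD : exists u, DD u.
Proof.
have w0 : ((1, 0) : P) != 0 by rewrite xpair_eqE negb_and oner_eq0.
by have [u [Du _]] := normalize _ w0; exists u.
Qed.

Lemma polytope_of (s : seq P) : (forall p, p \in s -> B p) ->
  (forall u, DD u -> exists2 p, p \in s & Fface B u p) -> polytope B.
Proof.
move=> sB sF; exists s; apply/seteqP; split; last exact: CH_sub B_convex sB.
move=> y By; apply: contrapT => ny.
have sne : s != [::].
  have [u Du] := some_DD; have [p ps _] := sF u Du.
  by apply/eqP => s0; move: ps; rewrite s0.
have [c Hc Hmin] := argmax_on _ _ (CH_ne sne) (CH_compact s) (sqd_cont y).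
set w : P := (y.1 - c.1, y.2 - c.2).
have claim : forall c', conv_hull s c' -> dotp w c' <= dotp w c.
  move=> c' hc'; rewrite leNgt; apply/negP => hlt.
  set a := dotp w c' - dotp w c.
  have a0 : 0 < a by rewrite /a subr_gt0.
  set D := (c'.1 - c.1) ^+ 2 + (c'.2 - c.2) ^+ 2.
  have D0 : 0 <= D by rewrite /D addr_ge0 // sqr_ge0.
  set l := a / (a + D).
  have aD : 0 < a + D by lra.
  have l0 : 0 < l by rewrite /l divr_gt0.
  have l1 : l <= 1 by rewrite /l ler_pdivrMr // mul1r; lra.
  have la : l * (a + D) = a by rewrite /l divfK // gt_eqF.
  have := Hmin _ (CH_convex _ _ _ hc' Hc (ltW l0) l1).
  have E : forall c2 : P, c2 = addp (scalep l c') (scalep (1 - l) c) ->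
     (y.1 - c2.1) * (y.1 - c2.1) + (y.2 - c2.2) * (y.2 - c2.2) =
     (w.1 * w.1 + w.2 * w.2) - 2 * l * a + l ^+ 2 * D.
    move=> c2 ->; rewrite /a /D /w /dotp /=; ring.
  rewrite (E _ erefl) => h.
  have h2 : 2 * l * a <= l ^+ 2 * D.
    move: h; rewrite /w /=; lra.
  have h3 : 2 * a <= l * D.
    by move: h2; rewrite expr2; nra.
  have : 2 * a * (a + D) <= a * D.
    have : 2 * a * (a + D) <= l * D * (a + D) by rewrite ler_wpM2r // ltW.
    have -> : l * D * (a + D) = a * D by rewrite mulrAC la.
    done.
  nra.
have wne : w != 0.
  apply/eqP => /eqP; rewrite xpair_eqE !subr_eq0 => /andP [/eqP h1 /eqP h2].
  by apply: ny; have -> : y = c by apply: pair_eq.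
have wpos := sq_pos w wne.
have [u [Du Hu]] := normalize w wne.
have [p ps Fp] := sF u Du.
have h1 := Hu p Fp y By.
have h2 := claim p (CH_mem ps).
have : dotp w y = dotp w c + (w.1 ^+ 2 + w.2 ^+ 2) by rewrite /w /dotp /=; ring.
lra.
Qed.


Lemma fin_collect (T : eqType) (cs : seq T) (Pr : T -> seq P -> Prop) :
  (forall c, c \in cs -> exists l, Pr c l) ->
  exists L : seq P, (forall c, c \in cs -> exists l, Pr c l /\ {subset l <= L}) /\
    (forall p, p \in L -> exists c l, c \in cs /\ Pr c l /\ p \in l).
Proof.
elim: cs => [|c cs IH] H; first by exists [::]; split.
have [l hl] := H c (mem_head _ _).
have H' : forall c', c' \in cs -> exists l, Pr c' l.
  by move=> c' hc'; apply: H; rewrite in_cons hc' orbT.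
have [L [H1 H2]] := IH H'.
exists (l ++ L); split.
  move=> c'; rewrite in_cons => /orP [/eqP ->|hc'].
    by exists l; split => // p hp; rewrite mem_cat hp.
  have [l' [hl' sl']] := H1 c' hc'.
  by exists l'; split => // p /sl' hp; rewrite mem_cat hp orbT.
move=> p; rewrite mem_cat => /orP [hp|hp].
  by exists c, l; split => //; rewrite mem_head.
have [c' [l' [hc' [hl' hp']]]] := H2 p hp.
by exists c', l'; split => //; rewrite in_cons hc' orbT.
Qed.

Lemma close_faces (d : R) : 0 < d -> ~ polytope B ->
  exists u v x y, DD u /\ DD v /\ Fface B u x /\ Fface B v y /\
    (~ exists z, Fface B u z /\ Fface B v z) /\ `|x - y| < d.
Proof.
move=> d0 np; apply: contrapT => nH.
have H : forall u v x y, DD u -> DD v -> Fface B u x -> Fface B v y -> `|x - y| < d ->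
    exists z, Fface B u z /\ Fface B v z.
  move=> u v x y Du Dv Fx Fy dxy; apply: contrapT => nz.
  by apply: nH; exists u, v, x, y; split.
apply: np.
have d2 : 0 < d / 2 by rewrite divr_gt0.
have cov : B `<=` \bigcup_(c in B) ball c (d / 2).
  by move=> x Bx; exists x => //; exact: ballxx.
have cB : @cover_compact P B.
  pose T : ptopologicalType := HB.pack_for ptopologicalType (R * R)%type
     (Pointed.class (R*R)%type) (Topological.class (R*R)%type).
  have E := @compact_cover T.
  have cB' : @compact T B by exact: B_compact.
  by rewrite E in cB'.
have [D' D'B D'cov] := cB P B (fun c => ball c (d / 2))
   (fun c _ => ball_open c (d / 2)) cov.
pose Pr := fun (c : P) (l : seq P) => (forall p, p \in l -> B p) /\
   (forall u x, DD u -> Fface B u x -> ball c (d / 2) x -> exists2 p, p \in l & Fface B u p).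
have [L [H1 H2]] : exists L : seq P, (forall c, c \in enum_fset D' -> exists l, Pr c l /\ {subset l <= L}) /\
    (forall p, p \in L -> exists c l, c \in enum_fset D' /\ Pr c l /\ p \in l).
  apply: fin_collect => c _.
  have [[u0 [x0 [Du0 [Fx0 bx0]]]]|nex] := pselect (exists u0 x0, DD u0 /\ Fface B u0 x0 /\ ball c (d / 2) x0).
    have [q1 [q2 [Fq1 [Fq2 Hq]]]] := endpoints _ Du0.
    exists [:: q1; q2]; split.
      move=> p; rewrite !in_cons in_nil orbF => /orP [] /eqP ->; [by case: Fq1| by case: Fq2].
    move=> u x Du Fx bx.
    have dx : `|x - x0| < d.
      move: bx bx0; rewrite -!ball_normE /= => bx bx0.
      have -> : x - x0 = (x - c) + (c - x0) by rewrite addrA subrK.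
      rewrite (le_lt_trans (ler_normD _ _)) // distrC.
      have -> : d = d / 2 + d / 2 by rewrite -splitr.
      by rewrite ltrD.
    have [z [Fz Fz0]] := H u u0 x x0 Du Du0 Fx Fx0 dx.
    have [h|h] := Hq u z Du Fz0 Fz.
      by exists q1 => //; rewrite mem_head.
    by exists q2 => //; rewrite !in_cons eqxx orbT.
  exists [::]; split => // u x Du Fx bx.
  by exfalso; apply: nex; exists u, x.
apply: (polytope_of L).
  move=> p /H2 [c [l [_ [[hl _] hp]]]]; exact: hl.
move=> u Du; have [x Fx] := D_face _ Du.
have [c hc bcx] := D'cov x (proj1 Fx).
have [l [[_ hl] sl]] := H1 c hc.
have [p hp Fp] := hl u x Du Fx bcx.
by exists p => //; exact: sl.
Qed.


Definition disj u v := ~ exists z, Fface B u z /\ Fface B v z.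

Lemma Ncone_D u : DD u -> Ncone B u = [set z | exists t, exists2 x, 0 <= t /\ Fface B u x & z = scalep t x].
Proof. by rewrite /Ncone /DD => ->; rewrite eqxx. Qed.

Lemma cell_bounded u v (b : P) : DD u -> DD v -> disj u v ->
  bounded2 [set z | (exists t, exists2 x, 0 <= t /\ Fface B u x & z = scalep t x) /\
                    (exists s, exists2 y, 0 <= s /\ Fface B v y & z = addp b (scalep s y))].
Proof.
move=> Du Dv duv.
have [q Fq Hq] := face_argmax _ (dotp u) Dv (dotp_cont u).
have [Rb [Rb0 HRb]] := B_bounded.
set m := Num.max (dotp u q) 0.
have m1 : m < 1.
  rewrite /m gt_max ltr01 andbT lt_neqAle (D_le _ _ Du (proj1 Fq)) andbT.
  apply/eqP => e; apply: duv; exists q; split => //; split => //; exact: (proj1 Fq).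
have m0 : 0 <= m by rewrite /m le_max lexx orbT.
have mq : dotp u q <= m by rewrite /m le_max lexx.
set K := (`|dotp u b| + `|dotp v b|) / (1 - m).
exists (K * Rb) => z [[t [x [t0 Fx] ez]] [s [y [s0 Fy] ez']]].
have h1 : dotp u z = t by rewrite ez dotpZ (proj2 Fx) mulr1.
have h2 : dotp u z = dotp u b + s * dotp u y by rewrite ez' /dotp /=; ring.
have h3 : dotp v z = dotp v b + s.
  transitivity (dotp v b + s * dotp v y); first by rewrite ez' /dotp /=; ring.
  by rewrite (proj2 Fy) mulr1.
have h4 : dotp v z <= t by rewrite ez dotpZ ler_piMr // (D_le _ _ Dv (proj1 Fx)).
have h5 : dotp u y <= m := le_trans (Hq _ Fy) mq.
have h6 : (1 - m) * t <= `|dotp u b| + `|dotp v b|.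
  have hub := ler_norm (dotp u b).
  have hvb : - dotp v b <= `|dotp v b| by rewrite -normrN ler_norm.
  have : s * dotp u y <= s * m by rewrite ler_wpM2l.
  have : m * s <= m * (t - dotp v b) by rewrite ler_wpM2l //; lra.
  have : - (m * dotp v b) <= `|dotp v b|.
    have e1 : - (m * dotp v b) <= `|m * dotp v b| by rewrite -normrN ler_norm.
    have e2 : `|m * dotp v b| <= `|dotp v b| by rewrite normrM ger0_norm // ler_piMl // ltW.
    lra.
  nra.
have tK : t <= K by rewrite /K ler_pdivlMr ?subr_gt0 // mulrC.
have hx := coord_le x; have Bx := HRb _ (proj1 Fx).
rewrite ez /= !normrM (ger0_norm t0).
have K0 : 0 <= K by apply: le_trans tK.
by split; apply: ler_pM => //; apply: le_trans Bx; case: hx.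
Qed.

Lemma EH_mem u v x y (b : P) t s : b != 0 -> DD u -> DD v -> disj u v ->
  Fface B u x -> Fface B v y -> 0 <= t -> 0 <= s ->
  scalep t x = addp b (scalep s y) -> EH B [set 0; b] (scalep t x).
Proof.
move=> b0 Du Dv duv Fx Fy t0 s0 e.
pose pi := fun s0 : P => if s0 == 0 then u else v.
have memC : forall z, Cpi B [set 0; b] pi z <->
  (exists t, exists2 x, 0 <= t /\ Fface B u x & z = scalep t x) /\
  (exists s, exists2 y, 0 <= s /\ Fface B v y & z = addp b (scalep s y)).
  move=> z; split.
    move=> H; split.
      have [w hw ->] := H 0 (or_introl erefl).
      move: hw; rewrite /pi eqxx Ncone_D // => -[t' [x' h ->]].
      exists t', x' => //; apply: pair_eq; rewrite /= !add0r //.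
    have [w hw ->] := H b (or_intror erefl).
    move: hw; rewrite /pi (negbTE b0) Ncone_D // => -[s' [y' h ->]].
    by exists s', y'.
  move=> [[t' [x' h1 e1]] [s' [y' h2 e2]]] s1 [->|->].
    exists z; first by rewrite /pi eqxx Ncone_D //; exists t', x'.
    by apply: pair_eq; rewrite /= !add0r.
  exists (scalep s' y'); first by rewrite /pi (negbTE b0) Ncone_D //; exists s', y'.
  exact: e2.
have zin : Cpi B [set 0; b] pi (scalep t x).
  by apply/memC; split; [exists t, x | exists s, y].
exists pi; split.
  move=> s1 _; rewrite /dual_ball /pi /=; case: (s1 == 0).
    by rewrite Du.
  by rewrite Dv.
split; first by exists (scalep t x).
split => //.
have [M HM] := cell_bounded _ _ b Du Dv duv.
by exists M => z /memC /HM.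
Qed.


Lemma div_mul_norm (a c : R) : c != 0 -> 0 <= a / c -> a / c * `|c| = `|a|.
Proof. by move=> c0 h; rewrite -(ger0_norm h) -normrM divfK. Qed.

Lemma disjC u v : disj u v -> disj v u.
Proof. by move=> h [z [h1 h2]]; apply: h; exists z. Qed.

Lemma far_pt u v x y (b : P) : b != 0 -> DD u -> DD v -> disj u v ->
  Fface B u x -> Fface B v y ->
  0 < (b.1 * x.2 - b.2 * x.1) * (b.1 * y.2 - b.2 * y.1) ->
  exists z, EH B [set 0; b] z /\
   ((exists t, z = scalep t x /\ t * `|x.1 * y.2 - x.2 * y.1| = `|b.1 * y.2 - b.2 * y.1|) \/
    (exists t, z = scalep t y /\ t * `|x.1 * y.2 - x.2 * y.1| = `|b.1 * x.2 - b.2 * x.1|)).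
Proof.
move=> b0 Du Dv duv Fx Fy.
have i1 : (b.1 * y.2 - b.2 * y.1) * x.1 = b.1 * (x.1 * y.2 - x.2 * y.1) + (b.1 * x.2 - b.2 * x.1) * y.1 by ring.
have i2 : (b.1 * y.2 - b.2 * y.1) * x.2 = b.2 * (x.1 * y.2 - x.2 * y.1) + (b.1 * x.2 - b.2 * x.1) * y.2 by ring.
move: i1 i2.
set bx := b.1 * x.2 - b.2 * x.1.
set by_ := b.1 * y.2 - b.2 * y.1.
set c := x.1 * y.2 - x.2 * y.1 => i1 i2 hb.
have bx0 : bx != 0 by apply/eqP => e; move: hb; rewrite e mul0r ltxx.
have by0 : by_ != 0 by apply/eqP => e; move: hb; rewrite e mulr0 ltxx.
have c0 : c != 0.
  apply/eqP => ec; move: i1 i2; rewrite ec !mulr0 !add0r => i1 i2.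
  set l := by_ / bx.
  have ey : y = scalep l x.
    by apply: pair_eq; rewrite /= /l mulrAC ?i1 ?i2 mulrC mulKf.
  have bxx : 0 < bx * bx by rewrite -expr2 exprn_even_gt0.
  have l0 : 0 < l.
    have -> : l = (bx * by_) / (bx * bx) by rewrite /l; field.
    by rewrite divr_gt0.
  have hu : l <= 1.
    have := D_le _ _ Du (proj1 Fy); rewrite ey dotpZ (proj2 Fx) mulr1 //.
  have hv : 1 <= l.
    have := proj2 Fy; rewrite ey dotpZ => e1.
    have := D_le _ _ Dv (proj1 Fx) => e2.
    by rewrite -e1 ler_piMr // ltW.
  have l1 : l = 1 by apply/le_anti; rewrite hu hv.
  apply: duv; exists x; split => //.
  by have := Fy; rewrite ey l1; congr Fface; apply: pair_eq; rewrite /= mul1r.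
have cc : 0 < c * c by rewrite -expr2 exprn_even_gt0.
have [A|A] := ltP 0 (by_ * c).
  have bxc : 0 < bx * c by nra.
  have t0 : 0 <= by_ / c.
    have -> : by_ / c = (by_ * c) / (c * c) by field.
    by rewrite divr_ge0 // ltW.
  have s0 : 0 <= bx / c.
    have -> : bx / c = (bx * c) / (c * c) by field.
    by rewrite divr_ge0 // ltW.
  exists (scalep (by_ / c) x); split; last by left; exists (by_ / c); split => //; exact: div_mul_norm.
  apply: (EH_mem _ _ _ _ _ _ _ b0 Du Dv duv Fx Fy t0 s0).
  by apply: pair_eq; rewrite /= mulrAC ?i1 ?i2 mulrDl mulfK // mulrAC.
have A' : 0 < by_ * (- c) by rewrite mulrN oppr_gt0 lt_neqAle A andbT mulf_eq0 negb_or by0.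
have bxc : 0 < bx * (- c) by nra.
have nc0 : - c != 0 by rewrite oppr_eq0.
have t0 : 0 <= bx / (- c).
  have -> : bx / (- c) = (bx * (- c)) / (c * c) by field.
  by rewrite divr_ge0 // ltW.
have s0 : 0 <= by_ / (- c).
  have -> : by_ / (- c) = (by_ * (- c)) / (c * c) by field.
  by rewrite divr_ge0 // ltW.
exists (scalep (bx / (- c)) y); split.
  apply: (EH_mem _ _ _ _ _ _ _ b0 Dv Du (disjC _ _ duv) Fy Fx t0 s0).
  have j1 : bx * y.1 = b.1 * (- c) + by_ * x.1 by rewrite i1; ring.
  have j2 : bx * y.2 = b.2 * (- c) + by_ * x.2 by rewrite i2; ring.
  by apply: pair_eq; rewrite /= mulrAC ?j1 ?j2 mulrDl mulfK // mulrAC.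
right; exists (bx / (- c)); split => //.
by rewrite -normrN; apply: div_mul_norm.
Qed.


Lemma abs_cases (a r : R) : r <= `|a| -> r <= a \/ a <= - r.
Proof. by rewrite ler_normr => /orP [h|h]; [left|right; rewrite lerNr]. Qed.

Lemma abs_lt (a d : R) : `|a| < d -> - d < a /\ a < d.
Proof. by rewrite ltr_norml => /andP. Qed.

Theorem main_sec : ~ polytope B -> exists a b : P, ~ bounded2 (EH B [set a; b]).
Proof.
move=> np; apply: contrapT => nH.
have hb : forall b : P, bounded2 (EH B [set 0; b]).
  by move=> b; apply: contrapT => nb; apply: nH; exists 0, b.
have [M1 HM1] := hb (1, 0).
have [M2 HM2] := hb (0, 1).
set M := `|M1| + `|M2|.
have M0 : 0 <= M by rewrite addr_ge0.
have [r [r0 Hr]] := B_ball.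
have [Rb [Rb0 HRb]] := B_bounded.
set den := 4 * Rb * (M + 1) + 2 * r.
have den0 : 0 < den by rewrite /den addr_gt0 // ?mulr_gt0 //; lra.
set d := r * r / den.
have d0 : 0 < d by rewrite /d divr_gt0 // mulr_gt0.
have dden : d * den = r * r by rewrite /d divfK // gt_eqF.
have dr : d <= r / 2.
  rewrite ler_pdivlMr //; have : d * (2 * r) <= d * den.
    rewrite ler_wpM2l ?ltW //.
    have ? : 0 < 4 * Rb * (M + 1) by rewrite !mulr_gt0 //; lra.
    rewrite /den; lra.
  rewrite dden => h; nra.
have dM : 4 * Rb * d * (M + 1) < r * r.
  have : d * den = 4 * Rb * d * (M + 1) + 2 * r * d by rewrite /den; ring.
  rewrite dden => ->; rewrite ltrDl mulr_gt0 // mulr_gt0 //.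
have [u [v [x [y [Du [Dv [Fx [Fy [duv dxy]]]]]]]]] := close_faces _ d0 np.
have [dx1 dx2] : `|x.1 - y.1| < d /\ `|x.2 - y.2| < d.
  by have [h1 h2] := coord_le (x - y); split; apply: le_lt_trans dxy.
have xr := face_norm _ _ _ Hr Du Fx.
have yr := face_norm _ _ _ Hr Dv Fy.
have [bx1 bx2] := coord_le x; have [by1 by2] := coord_le y.
have Bx := HRb _ (proj1 Fx); have By := HRb _ (proj1 Fy).
have cb : `|x.1 * y.2 - x.2 * y.1| <= 2 * Rb * d.
  have -> : x.1 * y.2 - x.2 * y.1 = x.1 * (y.2 - x.2) - x.2 * (y.1 - x.1) by ring.
  rewrite (le_trans (ler_normB _ _)) // !normrM.
  have -> : 2 * Rb * d = Rb * d + Rb * d by ring.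
  apply: lerD; apply: ler_pM => //; try apply: le_trans Bx => //.
    by rewrite distrC ltW.
  by rewrite distrC ltW.
have claim : forall z t (w : P), z = scalep t w -> r <= `|w| ->
    r / 2 <= t * `|x.1 * y.2 - x.2 * y.1| -> M < `|z|.
  move=> z t w -> rw tc.
  have c0 := normr_ge0 (x.1 * y.2 - x.2 * y.1).
  have t0 : 0 < t by nra.
  have h1 : r / 2 <= t * (2 * Rb * d) by apply: (le_trans tc); rewrite ler_wpM2l // ltW.
  have h2 : r * r <= t * r * (4 * Rb * d) by nra.
  have h3 : M + 1 < t * r by nra.
  rewrite normZ ger0_norm ?ltW //.
  have : t * r <= t * `|w| by rewrite ler_wpM2l // ltW.
  lra.
have finish : forall b : P, b != 0 -> (forall z, EH B [set 0; b] z -> `|z.1| <= M /\ `|z.2| <= M) ->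
    r / 2 <= `|b.1 * x.2 - b.2 * x.1| -> r / 2 <= `|b.1 * y.2 - b.2 * y.1| ->
    0 < (b.1 * x.2 - b.2 * x.1) * (b.1 * y.2 - b.2 * y.1) -> False.
  move=> b b0 HMb hx hy hxy.
  have [z [Ez [[t [ez et]]|[t [ez et]]]]] := far_pt _ _ _ _ _ b0 Du Dv duv Fx Fy hxy.
    have := claim z t x ez xr; rewrite et => /(_ hy).
    have [h1 h2] := HMb z Ez; rewrite prod_normE lt_max; apply/negP; rewrite negb_or -!leNgt h1 h2.
    done.
  have := claim z t y ez yr; rewrite et => /(_ hx).
  have [h1 h2] := HMb z Ez; rewrite prod_normE lt_max; apply/negP; rewrite negb_or -!leNgt h1 h2.
  done.
have : r <= `|x.1| \/ r <= `|x.2|.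
  by move: xr; rewrite prod_normE le_max => /orP [h|h]; [left|right].
move=> [h|h].
  apply: (finish (0, 1)).
  - by rewrite xpair_eqE negb_and oner_eq0 orbT.
  - move=> z /HM2 [h1 h2]; split; apply: le_trans (h1) _ || apply: le_trans (h2) _;
      rewrite /M; apply: (le_trans (ler_norm _)); rewrite ?lerDr ?lerDl //.
  - rewrite /= mul0r mul1r sub0r normrN; lra.
  - rewrite /= mul0r mul1r sub0r normrN.
    have := abs_lt _ _ dx1; case: (abs_cases _ _ h) => ? ?; rewrite ler_normr; apply/orP; [left|right]; lra.
  - rewrite /= !mul0r !mul1r !sub0r mulrNN.
    have := abs_lt _ _ dx1; case: (abs_cases _ _ h) => ? ?; nra.
apply: (finish (1, 0)).
- by rewrite xpair_eqE negb_and oner_eq0.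
- move=> z /HM1 [h1 h2]; split; apply: le_trans (h1) _ || apply: le_trans (h2) _;
    rewrite /M; apply: (le_trans (ler_norm _)); rewrite ?lerDr ?lerDl //.
- rewrite /= mul0r mul1r subr0; lra.
- rewrite /= mul0r mul1r subr0.
  have := abs_lt _ _ dx2; case: (abs_cases _ _ h) => ? ?; rewrite ler_normr; apply/orP; [left|right]; lra.
- rewrite /= !mul0r !mul1r !subr0.
  have := abs_lt _ _ dx2; case: (abs_cases _ _ h) => ? ?; nra.
Qed.

End Aux.

Theorem mainTheorem16 (R : realType) (B : set (R * R)) :
  gauge_ball B -> ~ polytope B ->
  exists a b : R * R, ~ bounded2 (EH B [set a; b]).
Proof. by move=> hB; exact: main_sec. Qed.
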